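(* Let $n\ge 1$ be an integer and $q\in\mathbb{C}$. The discriminant in $x$ of $K_n(x,q)=(1+x)^{2n}+qx^{n}$ is \[ \Delta_x\big(K_n(x,q)\big)=n^{2n}q^{2n-1}\,(q+2^{2n}). \]
   Context: For a polynomial $P(x)$ of degree $d$ with leading coefficient $a_d$ and roots $x_1,\dots,x_d$ (with multiplicity), its discriminant is $\Delta_x P=a_d^{2d-2}\prod_{1\le i<j\le d}(x_i-x_j)^2$. Here $K_n(x,q)$ is regarded as a monic polynomial of degree $2n$ in $x$. *)

(* Defs.v *)
From HB Require Import structures.
From mathcomp Require Import all_boot all_order all_algebra.
Set Implicit Arguments. Unset Strict Implicit. Unset Printing Implicit Defensive.
Import Order.TTheory GRing.Theory Num.Theory.
Local Open Scope ring_scope.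

(* Discriminant of a monic polynomial given its list of roots with
   multiplicity: prod_{i<j} (x_i - x_j)^2  (leading coefficient 1). *)
Definition disc_roots (R : comRingType) (rs : seq R) : R :=
  \prod_(i < size rs) \prod_(j < size rs | (i < j)%N) (rs`_i - rs`_j) ^+ 2.

Definition Kpoly (R : comRingType) (n : nat) (q : R) : {poly R} :=
  (1 + 'X) ^+ (2 * n) + q *: 'X^n.

(* Main.v *)
Require Import Defs.
From HB Require Import structures.
From mathcomp Require Import all_boot all_order all_algebra.
Import Order.TTheory GRing.Theory Num.Theory.
Local Open Scope ring_scope.

Lemma deriv_roots (R : comNzRingType) (rs : seq R) (i : 'I_(size rs)) :
  (\prod_(r <- rs) ('X - r%:P))^`().[rs`_i] =
  \prod_(j < size rs | j != i) (rs`_i - rs`_j).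
Proof.
rewrite (big_nth 0) big_mkord (bigD1 i) //= derivM derivXsubC mul1r hornerD.
rewrite hornerM hornerXsubC subrr mul0r addr0 horner_prod.
by apply: eq_bigr => j _; rewrite hornerXsubC.
Qed.

Lemma count_pairs d :
  (\sum_(i < d) #|[pred j : 'I_d | (i < j)%N]| = (d * d.-1)./2)%N.
Proof.
have E : forall i : 'I_d, #|[pred j : 'I_d | (i < j)%N]| = (d - i.+1)%N.
  move=> i; rewrite -sum1_card.
  rewrite -(big_mkord (fun j => (i < j)%N) (fun _ => 1%N)).
  rewrite (@big_cat_nat _ _ _ i.+1) //=.
  rewrite big1_seq; last first.
    by move=> j /andP[h]; rewrite mem_index_iota => /andP[_]; rewrite ltnS leqNgt h.
  rewrite add0n -big_filter.
  have -> : [seq j <- index_iota i.+1 d | (i < j)%N] = index_iota i.+1 d.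
    by apply/all_filterP/allP => j; rewrite mem_index_iota => /andP[].
  by rewrite sum1_size size_iota.
rewrite (eq_bigr _ (fun i _ => E i)).
rewrite (reindex_inj rev_ord_inj) /=.
rewrite (eq_bigr (fun i : 'I_d => nat_of_ord i)); last first.
  by move=> i _; rewrite /= subnSK // subKn // ltnW.
by rewrite -(big_mkord xpredT (fun i => i)) bin2_sum bin2.
Qed.

Lemma disc_sign (R : comNzRingType) (rs : seq R) :
  \prod_(i < size rs) \prod_(j < size rs | j != i) (rs`_i - rs`_j) =
  (-1) ^+ ((size rs * (size rs).-1)./2) * disc_roots rs.
Proof.
set d := size rs.
have E : forall i : 'I_d, \prod_(j < d | j != i) (rs`_i - rs`_j) =
   (\prod_(j < d | (i < j)%N) (rs`_i - rs`_j)) *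
   (\prod_(j < d | (j < i)%N) (rs`_i - rs`_j)).
  move=> i; rewrite (bigID (fun j : 'I_d => (i < j)%N)) /=; congr (_ * _).
    apply: eq_bigl => j; case: ltngtP => h; rewrite ?andbF ?andbT //.
    by apply/eqP => e; move: h; rewrite e ltnn.
  apply: eq_bigl => j; case: ltngtP => h; rewrite ?andbF ?andbT //=.
    by apply/eqP => e; move: h; rewrite e ltnn.
  by rewrite (_ : j = i) ?eqxx //; apply: val_inj.
rewrite (eq_bigr _ (fun i _ => E i)) big_split /=.
rewrite (exchange_big_dep xpredT) //=.
under [X in _ * X = _]eq_bigr => j _ do
  under eq_bigr => i _ do rewrite -opprB -mulN1r.
under [X in _ * X = _]eq_bigr => j _ do rewrite big_split /= prodr_const.
rewrite big_split /= prodrXr.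
rewrite [X in _ ^+ X](_ : _ = ((d * d.-1)./2)%N); last first.
  rewrite (eq_bigr (fun i : 'I_d => nat_of_ord i)); last first.
    move=> i _; rewrite -sum1_card.
    rewrite (eq_bigl (fun j : 'I_d => (j < i)%N)) //.
    by rewrite (big_ord_narrow (ltnW (ltn_ord i))) sum1_card card_ord.
  by rewrite -(big_mkord xpredT (fun i => i)) bin2_sum bin2.
rewrite mulrCA /disc_roots; congr (_ * _).
under [RHS]eq_bigr do rewrite prodrXl.
rewrite prodrXl expr2; congr (_ * _);
  under eq_bigr do rewrite big_mkcond;
  rewrite exchange_big /=; apply: eq_bigr => i _; by rewrite [RHS]big_mkcond.
Qed.

From mathcomp Require Import ring zify.

Theorem proposition2p1 (C : numClosedFieldType) (n : nat) (q : C)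
  (rs : seq C) :
  (1 <= n)%N ->
  Kpoly n q = \prod_(r <- rs) ('X - r%:P) ->
  disc_roots rs =
    (n%:R) ^+ (2 * n) * q ^+ (2 * n - 1) * (q + 2%:R ^+ (2 * n)).
Proof.
move=> hn HK.
have Pev : forall c, (\prod_(r <- rs) ('X - r%:P)).[c] = \prod_(i < size rs) (c - rs`_i).
  move=> c; rewrite horner_prod (big_nth 0) big_mkord.
  by apply: eq_bigr => i _; rewrite hornerXsubC.
have Kev : forall c, (Kpoly n q).[c] = (1 + c) ^+ (2 * n) + q * c ^+ n.
  by move=> c; rewrite /Kpoly !hornerE.
have e1 : (1 + 'X : {poly C}) = 'X - (-1)%:P by rewrite polyCN opprK addrC.
have hsz : size rs = (2 * n)%N.
  have := size_prod_XsubC rs id; rewrite -HK /Kpoly e1 size_polyDl.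
    by rewrite size_exp_XsubC; case.
  rewrite size_exp_XsubC; apply: (leq_ltn_trans (size_scale_leq _ _)).
  by rewrite size_polyXn ltnS ltn_Pmull.
have Kd : forall c, (Kpoly n q)^`().[c] =
    (1 + c) ^+ (2 * n).-1 * (2 * n)%:R + q * (c ^+ n.-1 * n%:R).
  move=> c; rewrite /Kpoly derivD deriv_exp derivZ derivXn e1 derivXsubC mul1r.
  rewrite hornerD hornerMn horner_exp hornerXsubC hornerZ hornerMn hornerXn.
  by rewrite opprK !mulr_natr (addrC c) addrC.
set P := \prod_(r <- rs) ('X - r%:P) in HK Pev *.
have hx : forall i : 'I_(size rs), (1 + rs`_i) ^+ (2 * n) + q * rs`_i ^+ n = 0.
  by move=> i; rewrite -Kev HK Pev (bigD1 i) //= subrr mul0r.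
have root_id : forall i : 'I_(size rs),
    rs`_i * (1 + rs`_i) * P^`().[rs`_i] = n%:R * q * rs`_i ^+ n * (1 - rs`_i).
  move=> i; have := hx i; rewrite -HK Kd; set x := rs`_i.
  case: (n) hn => [//|m] _ h.
  rewrite (_ : (2 * m.+1)%N = (2 * m).+2) ?mulnS // in h *.
  rewrite /= exprSr in h; rewrite (exprSr x m) in h *.
  apply/eqP; rewrite -subr_eq0 -(mulr0 ((2 * m).+2%:R * x)) -h; apply/eqP; ring.
have Pd : \prod_(i < size rs) P^`().[rs`_i] =
    (-1) ^+ ((size rs * (size rs).-1)./2) * disc_roots rs.
  by rewrite -disc_sign; apply: eq_bigr => i _; exact: deriv_roots.
have sgn : (-1) ^+ ((size rs * (size rs).-1)./2) = (-1) ^+ n :> C.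
  rewrite hsz -mulnA mul2n doubleK -signr_odd oddM -subn1 oddB ?oddM //=.
    by rewrite andbT signr_odd.
  by rewrite muln_gt0 hn.
rewrite sgn in Pd.
have ss : (-1) ^+ n * (-1) ^+ n = 1 :> C by rewrite -exprMn mulrNN mulr1 expr1n.
case: (eqVneq q 0) => [q0 | qn0].
  have i0 : 'I_(size rs) by rewrite hsz; exists 0%N; rewrite muln_gt0 hn.
  have h0 := hx i0; rewrite q0 mul0r addr0 in h0.
  have /eqP h1 : 1 + rs`_i0 == 0 by move/eqP: h0; rewrite expf_eq0 => /andP[].
  have : \prod_(i < size rs) P^`().[rs`_i] = 0.
    rewrite (bigD1 i0) //= -HK Kd h1 q0 mul0r addr0 expr0n.
    by case: (n) hn => [//|m] _; rewrite mulnS /= !mul0r.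
  rewrite Pd => /eqP; rewrite mulf_eq0 signr_eq0 /= => /eqP ->.
  rewrite q0 expr0n (_ : (2 * n - 1 == 0)%N = false) ?mulr0 ?mul0r //.
  by case: (n) hn => [//|m] _; rewrite mulnS.
have M : \prod_(i < size rs) (rs`_i * (1 + rs`_i) * P^`().[rs`_i]) =
    \prod_(i < size rs) (n%:R * q * rs`_i ^+ n * (1 - rs`_i)).
  by apply: eq_bigr => i _; exact: root_id.
rewrite !big_split /= !prodr_const card_ord prodrXl Pd in M.
have X0 : \prod_(i < size rs) rs`_i = 1.
  have := Pev 0; rewrite -HK Kev addr0 expr1n expr0n eqn0Ngt hn mulr0 addr0.
  under eq_bigr do rewrite sub0r.
  by rewrite prodrN card_ord hsz exprM sqrrN !expr1n mul1r => <-.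
have X1 : \prod_(i < size rs) (1 + rs`_i) = (-1) ^+ n * q.
  have := Pev (-1); rewrite -HK Kev addrN expr0n muln_eq0 orbC eqn0Ngt hn /= add0r.
  under eq_bigr do rewrite -opprD.
  by rewrite prodrN card_ord hsz exprM sqrrN !expr1n mul1r mulrC => ->.
have X2 : \prod_(i < size rs) (1 - rs`_i) = 2%:R ^+ (2 * n) + q.
  have := Pev 1; rewrite -HK Kev expr1n mulr1 => <-; congr (_ ^+ _ + _).
rewrite X0 X1 X2 expr1n mulr1 mul1r hsz in M.
apply: (mulfI qn0).
transitivity ((-1) ^+ n * (-1) ^+ n * (q * disc_roots rs)); first by rewrite ss mul1r.
transitivity ((-1) ^+ n * q * ((-1) ^+ n * disc_roots rs)); first ring.
rewrite M; case: (n) hn => [//|m] _.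
rewrite (_ : (2 * m.+1 - 1)%N = (2 * m).+1); last by rewrite mulnS subn1.
rewrite (_ : (2 * m.+1)%N = (2 * m).+2) ?mulnS // [q ^+ _.+2]exprS; ring.
Qed.
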